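(* Let ${\bf p}=({\bf p}_1,\dots,{\bf p}_n)$ and ${\bf q}=({\bf q}_1,\dots,{\bf q}_m)$ be configurations in $\mathbb R^d$ such that the affine span of ${\bf p}$ is $\mathbb R^d$ and the affine span of ${\bf q}$ is $\mathbb R^d$. (a) If the framework $(K(n,m),{\bf p},{\bf q})$ has an equilibrium stress whose stress matrix $\Omega$ is positive semidefinite of rank $n+m-d-1$, then $(K(n,m),{\bf p},{\bf q})$ is super stable and universally rigid. (b) If $(K(n,m),{\bf p},{\bf q})$ is dimensionally rigid, then it is universally rigid.
   Context: $(K(n,m),{\bf p},{\bf q})$ is the framework with bars joining ${\bf p}_i$ to ${\bf q}_j$ for all $i,j$ (vertices indexed $1,\dots,N$, $N=n+m$). An equilibrium stress of a framework $(G,{\bf p})$ is an assignment of scalars $\omega_{ij}=\omega_{ji}$ to the edges ($\omega_{ij}=0$ for non-edges) with $\sum_i\omega_{ij}({\bf p}_i-{\bf p}_j)=0$ for every vertex $j$; its stress matrix $\Omega$ is the $N\times N$ symmetric matrix with off-diagonal entries $-\omega_{ij}$ and diagonal entries chosen so all row sums are zero. A framework is universally rigid if every configuration in any $\mathbb R^D$ with the same edge lengths has all pairwise distances equal to those of the original. A framework whose affine span has dimension $d'$ is dimensionally rigid if every configuration in any $\mathbb R^D$ with the same edge lengths has affine span of dimension at most $d'$. Nonzero vectors ${\bf v}_1,\dots,{\bf v}_k\in\mathbb R^d$ lie on a conic at infinity if there is a nonzero symmetric $d\times d$ matrix $Q$ with ${\bf v}_i^tQ{\bf v}_i=0$ for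 all $i$. A framework with $N$ vertices whose affine span is $\mathbb R^d$ is super stable if it has an equilibrium stress with positive semidefinite stress matrix of rank $N-d-1$ and its edge vectors ${\bf p}_i-{\bf p}_j$ do not lie on a conic at infinity. *)

(* Defs.v *)
(* Scalars: an arbitrary real closed field R (R = the reals is the intended instance). *)
From HB Require Import structures.
From mathcomp Require Import all_boot all_order all_algebra.
Set Implicit Arguments. Unset Strict Implicit. Unset Printing Implicit Defensive.
Import Order.TTheory GRing.Theory Num.Theory.
Local Open Scope ring_scope.

Section Frameworks.
Variable R : rcfType.

Definition sqnorm (D : nat) (v : 'rV[R]_D) : R := \sum_(k < D) v 0 k ^+ 2.

(* dimension of the affine span of a (nonempty) configuration:
   rank of the span of all difference vectors x i - x j *)
Definition aff_dim (N D : nat) (x : 'I_N -> 'rV[R]_D) : nat :=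
  \rank (\sum_(i < N) \sum_(j < N) <<x i - x j>>)%MS.

Definition full_aff_span (N D : nat) (x : 'I_N -> 'rV[R]_D) : Prop :=
  (0 < N)%N /\ aff_dim x = D.

Definition eq_stress (N D : nat) (G : rel 'I_N) (x : 'I_N -> 'rV[R]_D)
    (w : 'I_N -> 'I_N -> R) : Prop :=
  [/\ forall i j, w i j = w j i,
      forall i j, ~~ G i j -> w i j = 0 &
      forall j, \sum_(i < N) w i j *: (x i - x j) = 0].

Definition stress_mx (N : nat) (w : 'I_N -> 'I_N -> R) : 'M[R]_N :=
  \matrix_(i, j) (if i == j then \sum_(k < N | k != i) w i k else - w i j).

Definition psd (N : nat) (A : 'M[R]_N) : Prop :=
  forall v : 'rV[R]_N, 0 <= (v *m A *m v^T) 0 0.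

Definition edges_on_conic_at_infinity (N D : nat) (G : rel 'I_N)
    (x : 'I_N -> 'rV[R]_D) : Prop :=
  exists Q : 'M[R]_D, [/\ Q^T = Q, Q != 0 &
    forall i j, G i j -> ((x i - x j) *m Q *m (x i - x j)^T) 0 0 = 0].

Definition super_stable (N D : nat) (G : rel 'I_N) (x : 'I_N -> 'rV[R]_D) : Prop :=
  full_aff_span x /\
  (exists w, [/\ eq_stress G x w, psd (stress_mx w) &
                 \rank (stress_mx w) = (N - D - 1)%N]) /\
  ~ edges_on_conic_at_infinity G x.

Definition universally_rigid (N D : nat) (G : rel 'I_N) (x : 'I_N -> 'rV[R]_D) : Prop :=
  forall (D' : nat) (y : 'I_N -> 'rV[R]_D'),
    (forall i j, G i j -> sqnorm (y i - y j) = sqnorm (x i - x j)) ->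
    forall i j, sqnorm (y i - y j) = sqnorm (x i - x j).

Definition dimensionally_rigid (N D : nat) (G : rel 'I_N) (x : 'I_N -> 'rV[R]_D) : Prop :=
  forall (D' : nat) (y : 'I_N -> 'rV[R]_D'),
    (forall i j, G i j -> sqnorm (y i - y j) = sqnorm (x i - x j)) ->
    (aff_dim y <= aff_dim x)%N.

End Frameworks.

(* complete bipartite graph K(n,m) on 'I_(n+m): first n vertices vs last m *)
Definition Kbip (n m : nat) : rel 'I_(n + m) := fun a b =>
  match split a, split b with
  | inl _, inr _ => true
  | inr _, inl _ => true
  | _, _ => false
  end.

(* joint configuration (p, q): vertex i<n is p_i, vertex n+j is q_j *)
Definition bipconf (T : Type) (n m : nat) (p : 'I_n -> T) (q : 'I_m -> T)
  : 'I_(n + m) -> T := fun k =>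
  match split k with inl i => p i | inr j => q j end.
Arguments Kbip n m : clear implicits.

(* Main.v *)
Require Import Defs.
From HB Require Import structures.
From mathcomp Require Import all_boot all_order all_algebra.
From mathcomp Require Import ring lra.
Import Order.TTheory GRing.Theory Num.Theory.
Local Open Scope ring_scope.
Set Implicit Arguments. Unset Strict Implicit. Unset Printing Implicit Defensive.

Section Aux.
Variable R : rcfType.

Definition Sx (N D : nat) (x : 'I_N -> 'rV[R]_D) : 'M[R]_D :=
  (\sum_(i < N) \sum_(j < N) <<x i - x j>>)%MS.

Lemma Sx_sup N D (x : 'I_N -> 'rV[R]_D) i j : (x i - x j <= Sx x)%MS.
Proof.
apply: (sumsmx_sup i) => //; apply: (sumsmx_sup j) => //; by rewrite genmxE.
Qed.

Lemma Sx_sub N D (x : 'I_N -> 'rV[R]_D) m (T : 'M[R]_(m, D)) :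
  (forall i j, (x i - x j <= T)%MS) -> (Sx x <= T)%MS.
Proof.
move=> H; apply/sumsmx_subP => i _; apply/sumsmx_subP => j _.
by rewrite genmxE.
Qed.

Lemma full_of N D (x : 'I_N -> 'rV[R]_D) : aff_dim x = D -> (1%:M <= Sx x)%MS.
Proof. by move=> H; apply: submx_full; rewrite /row_full -[X in _ == X]H. Qed.

Lemma full_ker N D (x : 'I_N -> 'rV[R]_D) p (M : 'M[R]_(D, p)) :
  (1%:M <= Sx x)%MS -> (forall i j, (x i - x j) *m M = 0) -> M = 0.
Proof.
move=> F H.
have : (1%:M <= kermx M)%MS.
  apply: submx_trans F _; apply: Sx_sub => i j; apply/sub_kermxP; exact: H.
by move/sub_kermxP; rewrite mul1mx.
Qed.

Lemma mx11_eq0 (A : 'M[R]_1) : A 0 0 = 0 -> A = 0.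
Proof. by move=> H; apply/matrixP => i j; rewrite !ord1 H mxE. Qed.

Definition bf D (Q : 'M[R]_D) (u v : 'rV[R]_D) := (u *m Q *m v^T) 0 0.

Lemma bfBl D (Q : 'M[R]_D) u1 u2 v : bf Q (u1 - u2) v = bf Q u1 v - bf Q u2 v.
Proof. by rewrite /bf !mulmxBl !mxE. Qed.
Lemma bfBr D (Q : 'M[R]_D) u v1 v2 : bf Q u (v1 - v2) = bf Q u v1 - bf Q u v2.
Proof.
rewrite /bf; have -> : (v1 - v2)^T = v1^T - v2^T by apply/matrixP=> i j; rewrite !mxE.
by rewrite mulmxBr !mxE.
Qed.
Lemma bfC D (Q : 'M[R]_D) u v : Q^T = Q -> bf Q u v = bf Q v u.
Proof.
move=> HQ; rewrite /bf.
have E : (u *m Q *m v^T)^T = v *m Q *m u^T by rewrite !trmx_mul trmxK HQ mulmxA.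
by rewrite -E [RHS]mxE.
Qed.

Lemma noconic D n m (p : 'I_n -> 'rV[R]_D) (q : 'I_m -> 'rV[R]_D) (Q : 'M[R]_D) :
  (1%:M <= Sx p)%MS -> (1%:M <= Sx q)%MS -> Q^T = Q ->
  (forall i j, bf Q (p i - q j) (p i - q j) = 0) -> Q = 0.
Proof.
move=> Fp Fq HQ H.
have key i i' j j' : bf Q (p i - p i') (q j - q j') = 0.
  move: (H i j) (H i' j) (H i j') (H i' j').
  rewrite !(bfBl, bfBr) !(bfC (q _) (p _) HQ) => h1 h2 h3 h4.
  lra.
have K2 j j' : (q j - q j') *m Q = 0.
  have M0 : Q *m (q j - q j')^T = 0.
    apply: (full_ker Fp) => i i'; apply: mx11_eq0.
    by rewrite mulmxA; exact: key.
  by apply: trmx_inj; rewrite trmx_mul HQ M0 trmx0.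
exact: (full_ker Fq).
Qed.

Lemma sqnormE D (v : 'rV[R]_D) : sqnorm v = (v *m v^T) 0 0.
Proof. rewrite /sqnorm mxE; apply: eq_bigr => k _; by rewrite mxE expr2. Qed.

Lemma sqnormA D D' (e : 'rV[R]_D) (A : 'M[R]_(D, D')) :
  sqnorm (e *m A) = (e *m (A *m A^T) *m e^T) 0 0.
Proof. by rewrite sqnormE trmx_mul !mulmxA. Qed.

Lemma bfQ D D' (e : 'rV[R]_D) (A : 'M[R]_(D, D')) :
  bf (A *m A^T - 1%:M) e e = sqnorm (e *m A) - sqnorm e.
Proof. by rewrite /bf sqnormA sqnormE mulmxBr mulmx1 mulmxBl !mxE. Qed.

Section Bip.
Variables (n m d : nat) (p : 'I_n -> 'rV[R]_d) (q : 'I_m -> 'rV[R]_d).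
Local Notation x := (bipconf p q).

Lemma bl i : x (lshift m i) = p i.
Proof. by rewrite /bipconf (unsplitK (inl i : 'I_n + 'I_m)). Qed.
Lemma br j : x (rshift n j) = q j.
Proof. by rewrite /bipconf (unsplitK (inr j : 'I_n + 'I_m)). Qed.
Lemma Kb i j : Kbip n m (lshift m i) (rshift n j).
Proof.
by rewrite /Kbip (unsplitK (inl i : 'I_n + 'I_m)) (unsplitK (inr j : 'I_n + 'I_m)).
Qed.

Lemma fullx : (1%:M <= Sx p)%MS -> (1%:M <= Sx x)%MS.
Proof.
move=> F; apply: submx_trans F _; apply: Sx_sub => i j.
by rewrite -bl -(bl j) Sx_sup.
Qed.

Lemma UR_affine (Fp : (1%:M <= Sx p)%MS) (Fq : (1%:M <= Sx q)%MS)
   D' (y : 'I_(n + m) -> 'rV[R]_D') (A : 'M[R]_(d, D')) :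
  (forall a b, y a - y b = (x a - x b) *m A) ->
  (forall a b, Kbip n m a b -> sqnorm (y a - y b) = sqnorm (x a - x b)) ->
  forall a b, sqnorm (y a - y b) = sqnorm (x a - x b).
Proof.
move=> hA hE.
have HQ : (A *m A^T - 1%:M)^T = A *m A^T - 1%:M.
  have tB (B C : 'M[R]_d) : (B - C)^T = B^T - C^T by apply/matrixP=> i j; rewrite !mxE.
  by rewrite tB trmx_mul trmxK trmx1.
have Q0 := noconic Fp Fq HQ.
have {}Q0 : A *m A^T - 1%:M = 0.
  apply: Q0 => i j; rewrite bfQ -(bl i) -(br j) -hA hE ?subrr //; exact: Kb.
have AA : A *m A^T = 1%:M by apply/eqP; rewrite -subr_eq0 Q0.
by move=> a b; rewrite hA sqnormA AA mulmx1 sqnormE.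
Qed.

Lemma sqnorm_row D1 D2 (u : 'rV[R]_D1) (v : 'rV[R]_D2) :
  sqnorm (row_mx u v) = sqnorm u + sqnorm v.
Proof. by rewrite /sqnorm big_split_ord /=; congr (_ + _); apply: eq_bigr => k _; rewrite ?row_mxEl ?row_mxEr. Qed.

Lemma sqnormZ D (c : R) (u : 'rV[R]_D) : sqnorm (c *: u) = c ^+ 2 * sqnorm u.
Proof. rewrite /sqnorm mulr_sumr; apply: eq_bigr => k _; by rewrite mxE exprMn. Qed.

Lemma partb (hp : full_aff_span p) (hq : full_aff_span q) :
  dimensionally_rigid (Kbip n m) x -> universally_rigid (Kbip n m) x.
Proof.
move=> DR D' y hE.
have Fp := full_of hp.2; have Fq := full_of hq.2.
pose z a := row_mx ((3/5 : R) *: x a) ((4/5 : R) *: y a).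
have zB a b : z a - z b = row_mx ((3/5 : R) *: (x a - x b)) ((4/5 : R) *: (y a - y b)).
  by rewrite /z opp_row_mx add_row_mx !scalerBr.
have hz : (aff_dim z <= aff_dim x)%N.
  apply: DR => a b ab; rewrite !zB !sqnorm_row !sqnormZ hE //; lra.
have rz : (\rank (Sx z) <= d)%N by apply: leq_trans hz (rank_leq_col _).
pose P1 : 'M[R]_(d + D', d) := col_mx 1%:M 0.
pose P2 : 'M[R]_(d + D', D') := col_mx 0 1%:M.
have zP1 a b : (z a - z b) *m P1 = (3/5 : R) *: (x a - x b).
  by rewrite zB mul_row_col mulmx1 mulmx0 addr0.
have zP2 a b : (z a - z b) *m P2 = (4/5 : R) *: (y a - y b).
  by rewrite zB mul_row_col mulmx1 mulmx0 add0r.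
set S := Sx z; pose M := S *m P1.
have FM : (1%:M <= M)%MS.
  apply: submx_trans (fullx Fp) _; apply: Sx_sub => a b.
  have -> : x a - x b = (5/3 : R) *: ((z a - z b) *m P1).
    have c : (5/3 * (3/5) : R) = 1 by field.
    by rewrite zP1 scalerA c scale1r.
  by apply: scalemx_sub; apply: submxMr; apply: Sx_sup.
have rM : (d <= \rank M)%N by have := mxrankS FM; rewrite mxrank1.
have rK : \rank (S :&: kermx P1)%MS = 0%N.
  have := mxrank_mul_ker S P1; rewrite -/M => h; apply/eqP; rewrite -leqn0.
  by rewrite -(leq_add2l (\rank M)) addn0 h (leq_trans rz rM).
have inj (w : 'rV[R]_(d + D')) : (w <= S)%MS -> w *m P1 = 0 -> w = 0.
  move=> wS wP; apply/eqP; rewrite -submx0.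
  have : (w <= S :&: kermx P1)%MS by rewrite sub_capmx wS; apply/sub_kermxP.
  by move/mxrankS; rewrite rK leqn0 mxrank_eq0 => /eqP ->; rewrite sub0mx.
pose A := (3/4 : R) *: (pinvmx M *m S *m P2).
apply: (UR_affine Fp Fq (A := A)) => // a b.
set u := z a - z b.
have uS : (u <= S)%MS by apply: Sx_sup.
have [a' ua] := submxP uS.
have uM : (u *m P1 <= M)%MS by rewrite ua -mulmxA submxMl.
set b' := u *m P1 *m pinvmx M.
have bM : b' *m M = u *m P1 by rewrite /b' mulmxKpV.
have wz : (b' - a') *m S = 0.
  apply: inj; first by rewrite submxMl.
  by rewrite -mulmxA -/M mulmxBl bM ua mulmxA subrr.
have bS : b' *m S = u by apply/eqP; rewrite -subr_eq0 [X in _ - X]ua -mulmxBl wz.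
have : u *m P2 = u *m P1 *m pinvmx M *m S *m P2 by rewrite -/b' bS.
rewrite zP2 zP1 => h.
move: h; rewrite /A; set PM := pinvmx M => h.
rewrite -scalemxAr !mulmxA -!scalemxAl in h *.
have -> : y a - y b = (5/4 : R) *: ((4/5 : R) *: (y a - y b)).
  by rewrite scalerA (_ : 5/4*(4/5) = 1 :> R) ?scale1r //; field.
by rewrite h scalerA; congr (_ *: _); field.
Qed.
End Bip.

Section Stress.
Variables (N : nat) (w : 'I_N -> 'I_N -> R).
Hypothesis hw : forall i j, w i j = w j i.
Local Notation O := (stress_mx w).

Lemma stress_sym : O^T = O.
Proof.
apply/matrixP => i j; rewrite !mxE eq_sym.
by case: eqP => [->|_] //; rewrite hw.
Qed.

Lemma mulO (v : 'rV[R]_N) j :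
  (v *m O) 0 j = - \sum_i w i j * (v 0 i - v 0 j).
Proof.
rewrite mxE (bigD1 j) //= [in RHS](bigD1 j) //= subrr mulr0 add0r mxE eqxx.
rewrite big_distrr /= -sumrN -big_split /=.
apply: eq_bigr => i ij; rewrite mxE (negPf ij) hw; ring.
Qed.

Lemma energy (v : 'rV[R]_N) :
  2 * (v *m O *m v^T) 0 0 = \sum_j \sum_i w i j * (v 0 i - v 0 j) ^+ 2.
Proof.
have E : (v *m O *m v^T) 0 0 = - \sum_j \sum_i w i j * (v 0 i - v 0 j) * v 0 j.
  rewrite mxE -sumrN; apply: eq_bigr => j _.
  by rewrite mulO mxE mulNr big_distrl.
have E2 : \sum_j \sum_i w i j * (v 0 i - v 0 j) * v 0 i = (v *m O *m v^T) 0 0.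
  rewrite E exchange_big /= -sumrN; apply: eq_bigr => i _.
  rewrite -sumrN; apply: eq_bigr => j _; rewrite (hw j i); ring.
have -> : 2 * (v *m O *m v^T) 0 0 = (v *m O *m v^T) 0 0 + (v *m O *m v^T) 0 0 by ring.
rewrite -[X in X + _]E2 [X in _ + X]E -sumrB; apply: eq_bigr => j _.
rewrite -sumrB; apply: eq_bigr => i _; ring.
Qed.

Lemma psd_zero (v : 'rV[R]_N) : psd O -> (v *m O *m v^T) 0 0 = 0 -> v *m O = 0.
Proof.
move=> P E; apply/matrixP => i j; rewrite (ord1 i) [RHS]mxE.
pose u : 'rV[R]_N := delta_mx 0 j.
have bfvu : bf O v u = (v *m O) 0 j by rewrite /bf trmx_delta -colE mxE.
have bfZl c (a b : 'rV[R]_N) : bf O (c *: a) b = c * bf O a b.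
  by rewrite /bf -!scalemxAl mxE.
have bfZr c (a b : 'rV[R]_N) : bf O a (c *: b) = c * bf O a b.
  rewrite /bf; have -> : (c *: b)^T = c *: b^T by apply/matrixP => k l; rewrite !mxE.
  by rewrite -scalemxAr mxE.
set a := (v *m O) 0 j.
set b := bf O u u.
have b0 : 0 <= b by apply: P.
pose t := a / (b + 1).
have ht : t * (b + 1) = a by rewrite /t mulfVK // gt_eqF // ltr_wpDl.
have := P (v - t *: u).
rewrite -/(bf O _ _) !(bfBl, bfBr) !(bfZl, bfZr) bfvu (bfC u v stress_sym) bfvu -/b.
rewrite -/(bf O v v) in E. rewrite E -/a => h.
have t0 : t = 0.
  have h2 : 0 <= - (t * t) * (b + 2) by rewrite -ht in h; nra.
  nra.
by rewrite -/a -ht t0 mul0r.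
Qed.

Definition Zt D (z : 'I_N -> 'rV[R]_D) : 'M[R]_(D, N) := \matrix_(c, i) z i 0 c.

Lemma energy_sum D (z : 'I_N -> 'rV[R]_D) :
  \sum_c 2 * (row c (Zt z) *m O *m (row c (Zt z))^T) 0 0 =
  \sum_j \sum_i w i j * sqnorm (z i - z j).
Proof.
under eq_bigr do rewrite energy.
rewrite exchange_big; apply: eq_bigr => j _.
rewrite exchange_big; apply: eq_bigr => i _.
rewrite /sqnorm mulr_sumr; apply: eq_bigr => c _; by rewrite !mxE.
Qed.
End Stress.

Lemma parta n m d (p : 'I_n -> 'rV[R]_d) (q : 'I_m -> 'rV[R]_d)
    (hp : full_aff_span p) (hq : full_aff_span q)
    (w : 'I_(n + m) -> 'I_(n + m) -> R) :
  eq_stress (Kbip n m) (bipconf p q) w -> psd (stress_mx w) ->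
  \rank (stress_mx w) = (n + m - d - 1)%N ->
  super_stable (Kbip n m) (bipconf p q) /\ universally_rigid (Kbip n m) (bipconf p q).
Proof.
set x := bipconf p q; move=> [hw hnon heq] P rk.
have Fp := full_of hp.2; have Fq := full_of hq.2.
have Fx : (1%:M <= Sx x)%MS := fullx q Fp.
split.
  split.
    split; first by case: hp => hn _; rewrite ltn_addr.
    apply/eqP; rewrite eqn_leq rank_leq_col /=.
    by have := mxrankS Fx; rewrite mxrank1.
  split; first by exists w.
  move=> [Q [HQ Qn0 HE]]; move/eqP: Qn0; apply.
  apply: (noconic Fp Fq HQ) => i j.
  by rewrite /bf -(bl p q i) -(br p q j) HE //; exact: Kb.
move=> D' y hE.
set O := stress_mx w.
set X := Zt x; set Y := Zt y.
have XO : X *m O = 0.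
  apply/row_matrixP => c; rewrite row_mul row0.
  apply/matrixP => i j; rewrite (ord1 i) mulO // [RHS]mxE.
  have := congr1 (fun M : 'rV[R]_d => M 0 c) (heq j); rewrite summxE /= [RHS]mxE => h.
  apply/eqP; rewrite oppr_eq0; apply/eqP; rewrite -[X in _ = X]h; apply: eq_bigr => k _; by rewrite !mxE.
have Ex : \sum_j \sum_i w i j * sqnorm (x i - x j) = 0.
  rewrite -energy_sum //; apply: big1 => c _.
  by rewrite -row_mul XO row0 !mul0mx mxE mulr0.
have Ey : \sum_c 2 * (row c Y *m O *m (row c Y)^T) 0 0 = 0.
  rewrite energy_sum // -[X in _ = X]Ex; apply: eq_bigr => j _; apply: eq_bigr => i _.
  case K: (Kbip n m i j); first by rewrite hE.
  by rewrite hnon ?K // !mul0r.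
have YO : Y *m O = 0.
  apply/row_matrixP => c; rewrite row_mul row0; apply: psd_zero => //.
  have nn : forall k : 'I_D', true -> 0 <= 2 * (row k Y *m O *m (row k Y)^T) 0 0.
    by move=> k _; rewrite mulr_ge0 //; apply: P.
  have := psumr_eq0P nn Ey; move=> /(_ c isT) /eqP; rewrite mulf_eq0 /= => /orP [|/eqP //].
  by rewrite pnatr_eq0.
pose K := col_mx X (const_mx 1 : 'M[R]_(1, n + m)).
have KO : K *m O = 0.
  rewrite mul_col_mx XO; apply/eqP; rewrite col_mx_eq0 eqxx /=; apply/eqP.
  apply/matrixP => i j; rewrite (ord1 i) mulO // [RHS]mxE.
  by rewrite big1 ?oppr0 // => k _; rewrite !mxE subrr mulr0.
have Kfree : row_free K.
  rewrite -kermx_eq0; apply/eqP/row_matrixP => r; rewrite row0.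
  set t := row r (kermx K).
  have tK : t *m K = 0 by rewrite /t -row_mul mulmx_ker row0.
  rewrite -(hsubmxK t) mul_row_col in tK; rewrite -(hsubmxK t).
  set u := lsubmx t in tK *; set c := rsubmx t in tK *.
  have ex i : (x i *m u^T) 0 0 = - c 0 0.
    have := congr1 (fun M : 'rV[R]_(n + m) => M 0 i) tK.
    rewrite [in RHS]mxE [X in X = _ -> _]mxE => h.
    have h' : \sum_k x i 0 k * u 0 k + c 0 0 = 0.
      rewrite -[X in _ = X]h; congr (_ + _).
        rewrite mxE; apply: eq_bigr => k _; by rewrite !mxE mulrC.
      by rewrite [RHS]mxE big_ord1 [const_mx _ _ _]mxE mulr1.
    rewrite mxE (eq_bigr (fun k => x i 0 k * u 0 k)); last by move=> k _; rewrite mxE.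
    lra.
  have uT0 : u^T = 0.
    apply: (full_ker Fx) => i j; apply: mx11_eq0.
    by rewrite mulmxBl [LHS]mxE ex [X in _ + X]mxE ex subrr.
  have u0 : u = 0 by rewrite -[u]trmxK uT0 trmx0.
  have c0 : c = 0.
    case: hp => hn _; apply: mx11_eq0.
    have := ex (lshift m (Ordinal hn)); rewrite u0 trmx0 mulmx0 mxE => /eqP.
    by rewrite eq_sym oppr_eq0 => /eqP.
  by rewrite u0 c0 row_mx0.
have rK : \rank K = (d + 1)%N by apply/eqP.
have hN : (d + 1 <= n + m)%N by rewrite -rK rank_leq_col.
have rker : \rank (kermx O) = (d + 1)%N.
  by rewrite mxrank_ker rk -subnDA subKn.
have KsubO : (K <= kermx O)%MS by apply/sub_kermxP.
have Osub : (kermx O <= K)%MS.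
  by rewrite -(geq_leqif (mxrank_leqif_sup KsubO)) rker rK leqnn.
have Ysub : (Y <= K)%MS by apply: submx_trans Osub; apply/sub_kermxP.
have [B YB] := submxP Ysub.
pose A := (lsubmx B)^T.
have YB' : Y = lsubmx B *m X + rsubmx B *m const_mx 1.
  by rewrite YB -{1}(hsubmxK B) mul_row_col.
have Ye a c : y a 0 c = (x a *m A) 0 c + rsubmx B c 0.
  have := congr1 (fun M : 'M[R]_(D', n + m) => M c a) YB'.
  rewrite [in LHS]mxE [X in _ = X -> _]mxE => ->; congr (_ + _).
    rewrite !mxE; apply: eq_bigr => k _; by rewrite !mxE mulrC.
  by rewrite mxE big_ord1 [const_mx _ _ _]mxE mulr1.
apply: (UR_affine Fp Fq (A := A)) => // a b.
apply/matrixP => i c; rewrite (ord1 i).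
have subE k (M1 M2 : 'rV[R]_k) c' : (M1 - M2) 0 c' = M1 0 c' - M2 0 c' by rewrite !mxE.
rewrite mulmxBl !subE !Ye; lra.
Qed.
End Aux.

Unset Implicit Arguments.
Theorem mainTheorem3 (R : rcfType) (n m d : nat)
    (p : 'I_n -> 'rV[R]_d) (q : 'I_m -> 'rV[R]_d)
    (hp : full_aff_span p) (hq : full_aff_span q) :
  ((exists w : 'I_(n + m) -> 'I_(n + m) -> R,
       [/\ eq_stress (Kbip n m) (bipconf p q) w,
           psd (stress_mx w) &
           \rank (stress_mx w) = (n + m - d - 1)%N]) ->
     super_stable (Kbip n m) (bipconf p q) /\
     universally_rigid (Kbip n m) (bipconf p q)) /\
  (dimensionally_rigid (Kbip n m) (bipconf p q) ->
     universally_rigid (Kbip n m) (bipconf p q)).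
Proof.
split.
  by move=> [w [hs P rk]]; exact: (parta hp hq hs P rk).
exact: (partb hp hq).
Qed.
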